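(* Let $I$ be a countable index set with nested finite subsets $I_1\subset I_2\subset\cdots$, $\bigcup_nI_n=I$, let $W$ be a compact Hausdorff space, $m:X^{\mathbb{R}}\to C^*(W)$ a sequence measure function, and $p\in\mathbb{N}^*$ a free ultrafilter. Then there exists $w_p\in W$ such that $\mu(\mathbf{x})(p)=m(\mathbf{x})(w_p)$ for all $\mathbf{x}\in X^{\mathbb{R}}$.
   Context: A nonnegative real sequence $\mathbf{x}$ is frame compatible if $0\le x_1\le|I_1|$ and $0\le x_i-x_{i-1}\le|I_i\setminus I_{i-1}|$ for $i\ge 2$; $X$ is the set of these, $X^+=\{c\mathbf{x}:\mathbf{x}\in X,c\ge0\}$, $X^{\mathbb{R}}=\{\mathbf{x}^1-\mathbf{x}^2:\mathbf{x}^j\in X^+\}$. $\mathbf{x}\approx\mathbf{y}$ iff $\lim_n(x_n-y_n)/|I_n|=0$; for nonnegative sequences $\mathbf{y}\leqq\mathbf{x}$ iff $\liminf_n(x_n-y_n)/|I_n|\ge0$. $C^*(W)$: real continuous functions on $W$. A sequence measure function is a linear $m:X^{\mathbb{R}}\to C^*(W)$ with: $m(\mathbf{x})=m(\mathbf{y})$ iff $\mathbf{x}\approx\mathbf{y}$ for $\mathbf{x},\mathbf{y}\in X^{\mathbb{R}}$; $m(\mathbf{x})\le m(\mathbf{y})$ pointwise iff $\mathbf{x}\leqq\mathbf{y}$ for $\mathbf{x},\mathbf{y}\in X^+$; $m(\mathbf{i})=1$ where $\mathbf{i}=(|I_1|,|I_2|,\dots)$. $\mathbb{N}^*$ is the set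 of free ultrafilters on $\mathbb{N}$; for a bounded sequence $\mathbf{y}$, $p\text{-}\lim\mathbf{y}=c$ iff for every $\varepsilon>0$, $\{n:|y_n-c|<\varepsilon\}\in p$. The ultrafilter sequence measure function is $\mu(\mathbf{x})(p)=p\text{-}\lim_n x_n/|I_n|$ for $\mathbf{x}\in X^{\mathbb{R}}$. *)

(* Defs.v *)
From HB Require Import structures.
From mathcomp Require Import all_boot all_order all_algebra.
From mathcomp Require Import finmap.
From mathcomp Require Import all_classical all_reals all_analysis.
Set Implicit Arguments. Unset Strict Implicit. Unset Printing Implicit Defensive.
Import Order.TTheory GRing.Theory Num.Theory.
Import numFieldNormedType.Exports.
Local Open Scope classical_set_scope.
Local Open Scope ring_scope.

(* Sequences are indexed from 0: x 0 corresponds to x_1 of the paper,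
   and I 0 to I_1. *)

Section Defs.
Variables (R : realType) (T : choiceType) (I : nat -> {fset T}).

Definition card_I (n : nat) : R := (#|` I n|)%:R.

Definition card_Idiff (n : nat) : R := (#|` (I n.+1 `\` I n)%fset|)%:R.

Definition iseq : nat -> R := card_I.

Definition frame_compatible (x : nat -> R) : Prop :=
  (0 <= x 0 <= card_I 0) /\
  (forall n, 0 <= x n.+1 - x n <= card_Idiff n).

Definition Xplus (x : nat -> R) : Prop :=
  exists (c : R) (y : nat -> R), 0 <= c /\ frame_compatible y /\ x = (fun n => c * y n).

Definition XR (x : nat -> R) : Prop :=
  exists x1 x2, Xplus x1 /\ Xplus x2 /\ x = (fun n => x1 n - x2 n).

Definition seq_approx (x y : nat -> R) : Prop :=
  (fun n => (x n - y n) / card_I n) @ \oo --> (0 : R).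

Definition seq_le (y x : nat -> R) : Prop :=
  (0 <= limn_einf (fun n => ((x n - y n) / card_I n)%:E))%E.

(* sequence measure function m : X^R -> C*(W) (values outside X^R irrelevant) *)
Definition sequence_measure_function (W : topologicalType)
  (m : (nat -> R) -> W -> R) : Prop :=
  (forall x, XR x -> continuous (m x)) /\
  (forall x y (a b : R), XR x -> XR y ->
      m (fun n => a * x n + b * y n) = (fun w => a * m x w + b * m y w)) /\
  (forall x y, XR x -> XR y -> (m x = m y <-> seq_approx x y)) /\
  (forall x y, Xplus x -> Xplus y -> ((forall w, m x w <= m y w) <-> seq_le x y)) /\
  (m iseq = fun _ => 1).

End Defs.

Definition free_ultrafilter (p : set_system nat) : Prop :=
  UltraFilter p /\ (forall n : nat, exists A, p A /\ ~ A n).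

Definition plim (R : realType) (p : set_system nat) (y : nat -> R) (c : R) : Prop :=
  forall eps : R, 0 < eps -> p [set n | `|y n - c| < eps].

(* Main.v *)
Require Import Defs.
From HB Require Import structures.
From mathcomp Require Import all_boot all_order all_algebra.
From mathcomp Require Import finmap.
From mathcomp Require Import all_classical all_reals all_analysis.
From mathcomp Require Import ring lra.
Import Order.TTheory GRing.Theory Num.Theory.
Import numFieldNormedType.Exports.
Local Open Scope classical_set_scope.
Local Open Scope ring_scope.
Set Implicit Arguments.

Lemma cardI_S (R : realType) (T : choiceType) (I : nat -> {fset T})
  (Inest : forall n, (I n `<=` I n.+1)%fset) n :
  card_I R I n.+1 = card_I R I n + card_Idiff R I n.
Proof.
rewrite /card_I /card_Idiff (cardfsDS (Inest n)) natrB ?fsubset_leq_card //.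
by rewrite addrC subrK.
Qed.

Lemma cardI_ge0 (R : realType) (T : choiceType) (I : nat -> {fset T}) n :
  0 <= card_I R I n.
Proof. by rewrite /card_I ler0n. Qed.

Lemma cardD_ge0 (R : realType) (T : choiceType) (I : nat -> {fset T}) n :
  0 <= card_Idiff R I n.
Proof. by rewrite /card_Idiff ler0n. Qed.

Lemma fc_bound (R : realType) (T : choiceType) (I : nat -> {fset T})
  (Inest : forall n, (I n `<=` I n.+1)%fset) (y : nat -> R) :
  frame_compatible I y -> forall n, 0 <= y n <= card_I R I n.
Proof.
move=> [h0 hS]; elim=> [//|n /andP[IH1 IH2]].
have /andP[a b] := hS n; rewrite cardI_S //.
apply/andP; split; lra.
Qed.

Lemma fc_iseq (R : realType) (T : choiceType) (I : nat -> {fset T})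
  (Inest : forall n, (I n `<=` I n.+1)%fset) :
  frame_compatible I (iseq R I).
Proof.
split; first by rewrite /iseq lexx cardI_ge0.
move=> n; rewrite /iseq cardI_S //; have := @cardD_ge0 R T I n; move=> h; apply/andP; split; lra.
Qed.

Lemma fc_zero (R : realType) (T : choiceType) (I : nat -> {fset T}) :
  frame_compatible I (fun _ => 0 : R).
Proof.
split; first by rewrite lexx cardI_ge0.
by move=> n; rewrite subrr lexx cardD_ge0.
Qed.

Lemma fc_conv (R : realType) (T : choiceType) (I : nat -> {fset T}) (y z : nat -> R) (t : R) :
  0 <= t <= 1 -> frame_compatible I y -> frame_compatible I z ->
  frame_compatible I (fun n => t * y n + (1 - t) * z n).
Proof.
move=> /andP[t0 t1] [/andP[y0 y1] yS] [/andP[z0 z1] zS]; split.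
  apply/andP; split; nra.
move=> n; have /andP[a b] := yS n; have /andP[c d] := zS n.
apply/andP; split; nra.
Qed.

Lemma fc_max (R : realType) (T : choiceType) (I : nat -> {fset T}) (y z : nat -> R) :
  frame_compatible I y -> frame_compatible I z ->
  frame_compatible I (fun n => Num.max (y n) (z n)).
Proof.
move=> [/andP[y0 y1] yS] [/andP[z0 z1] zS]; split.
  by case: (leP (y 0) (z 0)) => _; apply/andP; split.
move=> n; have /andP[a b] := yS n; have /andP[c d] := zS n.
case: (leP (y n) (z n)) => h1; case: (leP (y n.+1) (z n.+1)) => h2;
  apply/andP; split; lra.
Qed.

Lemma fc_min (R : realType) (T : choiceType) (I : nat -> {fset T}) (y z : nat -> R) :
  frame_compatible I y -> frame_compatible I z ->
  frame_compatible I (fun n => Num.min (y n) (z n)).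
Proof.
move=> [/andP[y0 y1] yS] [/andP[z0 z1] zS]; split.
  by case: (leP (y 0) (z 0)) => _; apply/andP; split.
move=> n; have /andP[a b] := yS n; have /andP[c d] := zS n.
case: (leP (y n) (z n)) => h1; case: (leP (y n.+1) (z n.+1)) => h2;
  apply/andP; split; lra.
Qed.

Lemma Xplus_fc (R : realType) (T : choiceType) (I : nat -> {fset T}) (y : nat -> R) :
  frame_compatible I y -> Xplus I y.
Proof. by move=> hy; exists 1, y; split => //; split => //; apply/funext => n; rewrite mul1r. Qed.

Lemma Xplus_scale (R : realType) (T : choiceType) (I : nat -> {fset T}) (x : nat -> R) (a : R) :
  0 <= a -> Xplus I x -> Xplus I (fun n => a * x n).
Proof.
move=> a0 [c [y [c0 [hy ->]]]]; exists (a * c), y; split; first exact: mulr_ge0.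
by split => //; apply/funext => n; rewrite mulrA.
Qed.

Lemma Xplus_add (R : realType) (T : choiceType) (I : nat -> {fset T}) (x z : nat -> R) :
  Xplus I x -> Xplus I z -> Xplus I (fun n => x n + z n).
Proof.
move=> [c [y [c0 [hy ->]]]] [d [u [d0 [hu ->]]]].
have [cd0|cdp] := eqVneq (c + d) 0.
  have c00 : c = 0 by lra.
  have d00 : d = 0 by lra.
  exists 0, y; split => //; split => //; apply/funext => n; rewrite c00 d00; ring.
have cdpos : 0 < c + d by rewrite lt_def cdp addr_ge0.
exists (c + d), (fun n => (c / (c + d)) * y n + (1 - c / (c + d)) * u n).
split; first exact: ltW.
split.
  apply: fc_conv => //; apply/andP; split.
    by apply: divr_ge0 => //; exact: ltW.
  by rewrite ler_pdivrMr // mul1r lerDl.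
apply/funext => n; rewrite mulrDr !mulrA mulrBr mulr1 mulrCA divff ?mulr1 //.
by field; rewrite gt_eqF.
Qed.

Lemma Xplus_max (R : realType) (T : choiceType) (I : nat -> {fset T}) (x z : nat -> R) :
  Xplus I x -> Xplus I z -> Xplus I (fun n => Num.max (x n) (z n)) /\ Xplus I (fun n => Num.min (x n) (z n)).
Proof.
move=> hx hz.
wlog: x z hx hz / exists c d y u, [/\ 0 <= d <= c, frame_compatible I y, frame_compatible I u,
       x = (fun n => c * y n) & z = (fun n => d * u n)].
  move=> H; have [c [y [c0 [hy ex]]]] := hx; have [d [u [d0 [hu ez]]]] := hz.
  have [dc|cd] := leP d c.
    by apply: (H x z) => //; exists c, d, y, u; split => //; apply/andP.
  have [h1 h2] : Xplus I (fun n => Num.max (z n) (x n)) /\ Xplus I (fun n => Num.min (z n) (x n)).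
    by apply: (H z x) => //; exists d, c, u, y; split => //; apply/andP; split => //; exact: ltW.
  split.
    by have -> : (fun n => Num.max (x n) (z n)) = (fun n => Num.max (z n) (x n)) by apply/funext => n; rewrite maxC.
  by have -> : (fun n => Num.min (x n) (z n)) = (fun n => Num.min (z n) (x n)) by apply/funext => n; rewrite minC.
move=> [c [d [y [u [/andP[d0 dc] hy hu -> ->]]]]].
have [c00|cp] := eqVneq c 0.
  have d00 : d = 0 by lra.
  split; exists 0, y; (split => //; split => //); apply/funext => n; rewrite c00 d00 !mul0r;
   [exact: maxxx | exact: minxx].
have cpos : 0 < c by rewrite lt_def cp (le_trans d0 dc).
have t01 : 0 <= d / c <= 1 by rewrite divr_ge0 ?(ltW cpos) //= ler_pdivrMr // mul1r.
have hu' : frame_compatible I (fun n => d / c * u n).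
  have := @fc_conv R T I _ _ _ t01 hu (@fc_zero R T I).
  by have -> : (fun n => d / c * u n + (1 - d / c) * 0) = (fun n => d / c * u n) by apply/funext => n; rewrite mulr0 addr0.
have eq1 : forall n, d * u n = c * (d / c * u n).
  by move=> n; rewrite mulrA mulrCA divff ?mulr1 // gt_eqF.
split.
  exists c, (fun n => Num.max (y n) (d / c * u n)); split; first exact: ltW.
  split; first exact: fc_max.
  by apply/funext => n; rewrite eq1 maxr_pMr // ltW.
exists c, (fun n => Num.min (y n) (d / c * u n)); split; first exact: ltW.
split; first exact: fc_min.
by apply/funext => n; rewrite eq1 minr_pMr // ltW.
Qed.

Lemma Xplus_zero (R : realType) (T : choiceType) (I : nat -> {fset T}) :
  Xplus I (fun _ => 0 : R).
Proof. exact/Xplus_fc/fc_zero. Qed.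

Lemma XR_Xplus (R : realType) (T : choiceType) (I : nat -> {fset T}) (x : nat -> R) :
  Xplus I x -> XR I x.
Proof.
move=> hx; exists x, (fun _ => 0); split => //; split; first exact: Xplus_zero.
by apply/funext => n; rewrite subr0.
Qed.

Lemma XR_add (R : realType) (T : choiceType) (I : nat -> {fset T}) (x z : nat -> R) :
  XR I x -> XR I z -> XR I (fun n => x n + z n).
Proof.
move=> [a [b [ha [hb ->]]]] [c [d [hc [hd ->]]]].
exists (fun n => a n + c n), (fun n => b n + d n).
split; first exact: Xplus_add. split; first exact: Xplus_add.
by apply/funext => n; ring.
Qed.

Lemma XR_scale (R : realType) (T : choiceType) (I : nat -> {fset T}) (x : nat -> R) (k : R) :
  XR I x -> XR I (fun n => k * x n).
Proof.
move=> [a [b [ha [hb ->]]]].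
have [k0|k0] := leP 0 k.
  exists (fun n => k * a n), (fun n => k * b n).
  split; first exact: Xplus_scale. split; first exact: Xplus_scale.
  by apply/funext => n; ring.
exists (fun n => (- k) * b n), (fun n => (- k) * a n).
have k0' : 0 <= - k by lra.
split; first exact: Xplus_scale. split; first exact: Xplus_scale.
by apply/funext => n; ring.
Qed.

Lemma XR_abs (R : realType) (T : choiceType) (I : nat -> {fset T}) (x : nat -> R) :
  XR I x -> XR I (fun n => `|x n|).
Proof.
move=> [a [b [ha [hb ->]]]].
have [h1 h2] := Xplus_max ha hb.
exists (fun n => Num.max (a n) (b n)), (fun n => Num.min (a n) (b n)).
split => //; split => //; apply/funext => n.
case: (leP (a n) (b n)) => h.
  by rewrite ler0_norm ?subr_le0 // opprB.
by rewrite gtr0_norm ?subr_gt0.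
Qed.

Lemma XR_iseq (R : realType) (T : choiceType) (I : nat -> {fset T})
  (Inest : forall n, (I n `<=` I n.+1)%fset) : XR I (iseq R I).
Proof. exact/XR_Xplus/Xplus_fc/fc_iseq. Qed.

Lemma XR_zero (R : realType) (T : choiceType) (I : nat -> {fset T}) :
  XR I (fun _ => 0 : R).
Proof. exact/XR_Xplus/Xplus_zero. Qed.

Lemma Xplus_bound (R : realType) (T : choiceType) (I : nat -> {fset T})
  (Inest : forall n, (I n `<=` I n.+1)%fset) (x : nat -> R) :
  Xplus I x -> exists B, 0 <= B /\ forall n, 0 <= x n <= B * card_I R I n.
Proof.
move=> [c [y [c0 [hy ->]]]]; exists c; split => // n.
have /andP[a b] := fc_bound Inest hy n.
by rewrite mulr_ge0 //= ler_wpM2l.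
Qed.

Lemma XR_bound (R : realType) (T : choiceType) (I : nat -> {fset T})
  (Inest : forall n, (I n `<=` I n.+1)%fset) (x : nat -> R) :
  XR I x -> exists B, 0 <= B /\ forall n, `|x n| <= B * card_I R I n.
Proof.
move=> [a [b [ha [hb ->]]]].
have [B1 [B10 h1]] := Xplus_bound Inest ha.
have [B2 [B20 h2]] := Xplus_bound Inest hb.
exists (B1 + B2); split; first exact: addr_ge0.
move=> n; have /andP[u v] := h1 n; have /andP[u' v'] := h2 n.
rewrite mulrDl; apply: (le_trans (ler_normB _ _)).
by rewrite ger0_norm // ger0_norm // lerD.
Qed.

Lemma linf_sup (R : realType) (u : (\bar R)^nat) :
  limn_einf u = ereal_sup (range (einfs u)).
Proof. by rewrite limn_einf_lim; apply: cvg_lim => //; exact: cvg_einfs_sup. Qed.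

Lemma linf_ge0 (R : realType) (u : nat -> R) :
  (forall n, 0 <= u n) -> (0 <= limn_einf (fun n => (u n)%:E))%E.
Proof.
move=> h; rewrite linf_sup; apply: (@le_trans _ _ (einfs (fun n => (u n)%:E) 0%N)).
  apply/ereal_infP => _ [k _ <-]; by rewrite lee_fin.
by apply: ereal_sup_ubound; exists 0%N.
Qed.

Lemma linf_le (R : realType) (u : nat -> R) (r : R) :
  (forall N, exists k, (N <= k)%N /\ u k <= r) -> (limn_einf (fun n => (u n)%:E) <= r%:E)%E.
Proof.
move=> h; rewrite linf_sup; apply: ge_ereal_sup => _ [N _ <-].
have [k [Nk ukr]] := h N.
apply: (@le_trans _ _ (u k)%:E); last by rewrite lee_fin.
by apply: ereal_inf_lbound; exists k.
Qed.

Lemma free_proper (p : set_system nat) : free_ultrafilter p -> ProperFilter p.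
Proof. by move=> [pU _]; exact: ultra_proper. Qed.

Lemma free_ge (p : set_system nat) : free_ultrafilter p -> forall N, p [set n | (N <= n)%N].
Proof.
move=> hp; have pF := free_proper hp.
elim=> [|N IH]; first by apply: filterS filterT.
have [A [pA nA]] := hp.2 N.
apply: filterS (filterI IH pA) => n /= [h1 h2].
rewrite ltn_neqAle h1 andbT; apply/eqP => e; by subst.
Qed.

Lemma free_inf (p : set_system nat) A : free_ultrafilter p -> p A ->
  forall N, exists n, (N <= n)%N /\ A n.
Proof.
move=> hp pA N; have pF := free_proper hp.
have [n [h1 h2]] := filter_ex (filterI (free_ge hp N) pA).
by exists n.
Qed.

Lemma plim_ex (R : realType) (p : set_system nat) (y : nat -> R) (B : R) :
  free_ultrafilter p -> (forall n, `|y n| <= B) -> exists c, plim p y c.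
Proof.
move=> hp hB; have pF := free_proper hp.
have yF : ProperFilter (y @ p) by exact: fmap_proper_filter.
have yB : (y @ p) `[- B, B]%classic.
  apply: (@filterS _ p _ setT); last exact: filterT.
  by move=> n _ /=; rewrite in_itv /= -ler_norml.
have [c [_ cc]] := @segment_compact R (- B) B (y @ p) yF yB.
exists c => eps eps0.
have [//|pC] := in_ultra_setVsetC [set n | `|y n - c| < eps] hp.1.
have := cc [set r | ~ `|r - c| < eps] (ball c eps) pC (nbhsx_ballx c eps eps0).
move=> [r [/= h1 h2]]; apply: False_ind; apply: h1.
by move: h2; rewrite /ball /= distrC.
Qed.

Lemma m_lin (R : realType) (T : choiceType) (I : nat -> {fset T}) (W : topologicalType)
  (m : (nat -> R) -> W -> R) (hm : sequence_measure_function I m) x y a b w :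
  XR I x -> XR I y -> m (fun n => a * x n + b * y n) w = a * m x w + b * m y w.
Proof. by move=> hx hy; have [_ [hl _]] := hm; rewrite (hl x y a b hx hy). Qed.

Lemma m_sub (R : realType) (T : choiceType) (I : nat -> {fset T}) (W : topologicalType)
  (m : (nat -> R) -> W -> R) (hm : sequence_measure_function I m) x y w :
  XR I x -> XR I y -> m (fun n => x n - y n) w = m x w - m y w.
Proof.
move=> hx hy.
have -> : (fun n => x n - y n) = (fun n => 1 * x n + (-1) * y n) by apply/funext => n; ring.
by rewrite (m_lin hm _ _ _ hx hy); ring.
Qed.

Lemma m_add (R : realType) (T : choiceType) (I : nat -> {fset T}) (W : topologicalType)
  (m : (nat -> R) -> W -> R) (hm : sequence_measure_function I m) x y w :
  XR I x -> XR I y -> m (fun n => x n + y n) w = m x w + m y w.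
Proof.
move=> hx hy.
have -> : (fun n => x n + y n) = (fun n => 1 * x n + 1 * y n) by apply/funext => n; ring.
by rewrite (m_lin hm _ _ _ hx hy); ring.
Qed.

Lemma m_scale (R : realType) (T : choiceType) (I : nat -> {fset T}) (W : topologicalType)
  (m : (nat -> R) -> W -> R) (hm : sequence_measure_function I m) x a w :
  XR I x -> m (fun n => a * x n) w = a * m x w.
Proof.
move=> hx.
have -> : (fun n => a * x n) = (fun n => a * x n + 0 * x n) by apply/funext => n; ring.
by rewrite (m_lin hm _ _ _ hx hx); ring.
Qed.

Lemma m_const (R : realType) (T : choiceType) (I : nat -> {fset T})
  (Inest : forall n, (I n `<=` I n.+1)%fset) (W : topologicalType)
  (m : (nat -> R) -> W -> R) (hm : sequence_measure_function I m) a w :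
  m (fun n => a * iseq R I n) w = a.
Proof.
rewrite (m_scale hm _ _ (@XR_iseq R T I Inest)).
by have [_ [_ [_ [_ ->]]]] := hm; rewrite mulr1.
Qed.

Lemma m_mono (R : realType) (T : choiceType) (I : nat -> {fset T}) (W : topologicalType)
  (m : (nat -> R) -> W -> R) (hm : sequence_measure_function I m) u v :
  XR I u -> XR I v -> (forall n, u n <= v n) -> forall w, m u w <= m v w.
Proof.
move=> hu hv; have [a1 [b1 [ha1 [hb1 eu]]]] := hu; have [a2 [b2 [ha2 [hb2 ev]]]] := hv.
move=> huv w; subst u v.
have [_ [_ [_ [ho _]]]] := hm.
have := (ho _ _ (Xplus_add ha1 hb2) (Xplus_add ha2 hb1)).2.
move=> /(_ _) H.
have H' : forall w, m (fun n => a1 n + b2 n) w <= m (fun n => a2 n + b1 n) w.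
  apply: H; apply: linf_ge0 => n; apply: divr_ge0; last exact: cardI_ge0.
  have := huv n; rewrite /=; lra.
have := H' w.
rewrite (m_sub hm w (XR_Xplus ha1) (XR_Xplus hb1)) (m_sub hm w (XR_Xplus ha2) (XR_Xplus hb2)).
rewrite (m_add hm w (XR_Xplus ha1) (XR_Xplus hb2)) (m_add hm w (XR_Xplus ha2) (XR_Xplus hb1)); lra.
Qed.

Lemma m_abs (R : realType) (T : choiceType) (I : nat -> {fset T}) (W : topologicalType)
  (m : (nat -> R) -> W -> R) (hm : sequence_measure_function I m) u w :
  XR I u -> `|m u w| <= m (fun n => `|u n|) w.
Proof.
move=> hu; have hau := XR_abs hu.
have h1 := m_mono hm hu hau (fun n => ler_norm (u n)) w.
have : m (fun n => -1 * u n) w <= m (fun n => `|u n|) w.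
  apply: (m_mono hm (XR_scale (-1) hu) hau).
  by move=> n; rewrite mulN1r -normrN ler_norm.
rewrite (m_scale hm _ _ hu) => h3.
case: (leP 0 (m u w)) => h; [rewrite ger0_norm // | rewrite ltr0_norm //]; lra.
Qed.

Lemma Ipos (R : realType) (T : choiceType) (t0 : T) (I : nat -> {fset T})
  (Inest : forall n, (I n `<=` I n.+1)%fset)
  (Icover : forall t : T, exists n, t \in I n) :
  exists N0, forall n, (N0 <= n)%N -> 0 < card_I R I n.
Proof.
have [n0 hn0] := Icover t0; exists n0 => n hn.
have mem : t0 \in I n.
  rewrite -(subnKC hn); elim: (n - n0)%N => [|k IH]; first by rewrite addn0.
  by rewrite addnS; apply: (fsubsetP (Inest _)).
rewrite /card_I ltr0n cardfs_gt0; apply/eqP => e; by rewrite e in mem.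
Qed.

Lemma ratio_bound (R : realType) (T : choiceType) (I : nat -> {fset T})
  (Inest : forall n, (I n `<=` I n.+1)%fset) (x : nat -> R) :
  XR I x -> exists B, forall n, `|x n / card_I R I n| <= B.
Proof.
move=> hx; have [B [B0 hB]] := XR_bound Inest hx; exists B => n.
have [e|ne] := eqVneq (card_I R I n) 0.
  by rewrite e invr0 mulr0 normr0.
have cp : 0 < card_I R I n by rewrite lt_def ne cardI_ge0.
by rewrite normrM normfV (gtr0_norm cp) ler_pdivrMr.
Qed.

Lemma close_p (R : realType) (T : choiceType) (I : nat -> {fset T})
  (p : set_system nat) (hp : free_ultrafilter p) (N0 : nat)
  (hN0 : forall n, (N0 <= n)%N -> 0 < card_I R I n) (x : nat -> R) c :
  plim p (fun n => x n / card_I R I n) c ->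
  forall e, 0 < e -> p [set n | (N0 <= n)%N /\ `|x n - c * iseq R I n| <= e * card_I R I n].
Proof.
move=> hc e e0; have pF := free_proper hp.
apply: filterS (filterI (free_ge hp N0) (hc e e0)) => n /= [h1 h2]; split => //.
have cp := hN0 n h1.
have -> : x n - c * iseq R I n = (x n / card_I R I n - c) * card_I R I n.
  by rewrite /iseq mulrBl -mulrA mulVf ?mulr1 // gt_eqF.
by rewrite normrM (gtr0_norm cp) ler_pM2r // ltW.
Qed.

Lemma XR_subc (R : realType) (T : choiceType) (I : nat -> {fset T})
  (Inest : forall n, (I n `<=` I n.+1)%fset) (x : nat -> R) c :
  XR I x -> XR I (fun n => x n - c * iseq R I n).
Proof.
move=> hx; have := XR_add hx (XR_scale (- c) (@XR_iseq R T I Inest)).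
by have -> : (fun n => x n + - c * iseq R I n) = (fun n => x n - c * iseq R I n)
  by apply/funext => n; ring.
Qed.

Lemma gsum_prop (R : realType) (T : choiceType) (I : nat -> {fset T})
  (Inest : forall n, (I n `<=` I n.+1)%fset) (W : topologicalType)
  (m : (nat -> R) -> W -> R) (hm : sequence_measure_function I m)
  (p : set_system nat) (hp : free_ultrafilter p) (N0 : nat)
  (hN0 : forall n, (N0 <= n)%N -> 0 < card_I R I n)
  (c : (nat -> R) -> R)
  (hc : forall x, XR I x -> plim p (fun n => x n / card_I R I n) (c x))
  (s : seq ((nat -> R) * R)) :
  (forall i, i \in s -> XR I i.1 /\ 0 < i.2) ->
  let g := fun n => \sum_(i <- s) (i.2)^-1 * `|i.1 n - c i.1 * iseq R I n| in
  [/\ XR I g,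
      (forall w, 0 <= m g w /\ forall i, i \in s -> (i.2)^-1 * `|m i.1 w - c i.1| <= m g w) &
      (forall e, 0 < e -> p [set n | (N0 <= n)%N /\ g n <= e * card_I R I n])].
Proof.
have pF := free_proper hp.
elim: s => [|i s IH] hs g.
  have -> : g = (fun _ => 0) by apply/funext => n; rewrite /g big_nil.
  split; first exact: XR_zero.
    move=> w; split => //.
    have -> : m (fun _ => 0) w = 0 * m (fun _ => 0) w.
      by rewrite -(m_scale hm 0 w (@XR_zero R T I)); congr m; apply/funext => n; rewrite mul0r.
    by rewrite mul0r.
  move=> e e0; apply: (@filterS _ _ _ _ _ _ (free_ge hp N0)) => n h; split => //.
  by rewrite mulr_ge0 // ?cardI_ge0 // ltW.
have [hi1 hi2] := hs i (mem_head _ _).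
have hs' : forall j, j \in s -> XR I j.1 /\ 0 < j.2.
  by move=> j js; apply: hs; rewrite in_cons js orbT.
have [IH1 IH2 IH3] := IH hs'.
set g' := (fun n => \sum_(j <- s) (j.2)^-1 * `|j.1 n - c j.1 * iseq R I n|) in IH1 IH2 IH3.
set t := (fun n => (i.2)^-1 * `|i.1 n - c i.1 * iseq R I n|).
have hd := XR_subc Inest (c i.1) hi1.
have ht : XR I t by apply: XR_scale; exact: XR_abs.
have -> : g = (fun n => t n + g' n) by apply/funext => n; rewrite /g big_cons.
have mt : forall w, (i.2)^-1 * `|m i.1 w - c i.1| <= m t w.
  move=> w; rewrite /t (m_scale hm _ _ (XR_abs hd)) ler_pM2l ?invr_gt0 //.
  have := m_abs hm w hd.
  by rewrite (m_sub hm w hi1 (XR_scale (c i.1) (@XR_iseq R T I Inest))) (m_const Inest hm).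
have mt0 : forall w, 0 <= m t w.
  move=> w; apply: le_trans (mt w); apply: mulr_ge0; [by rewrite invr_ge0 ltW | exact: normr_ge0].
split; first exact: XR_add.
  move=> w; rewrite (m_add hm w ht IH1); have [g0 gi] := IH2 w; split.
    exact: addr_ge0.
  move=> j; rewrite in_cons => /orP[/eqP ->|js].
    have := mt w; lra.
  have := gi j js; have := mt0 w; lra.
move=> e e0.
have e2 : 0 < e / 2 by rewrite divr_gt0.
have e3 : 0 < i.2 * (e / 2) by rewrite mulr_gt0.
have PP := filterI (@close_p R T I p hp N0 hN0 _ _ (hc _ hi1) _ e3) (IH3 _ e2).
have pFF : Filter p := pF.
apply: (@filterS _ p pFF _ _ _ (PP pFF)) => n /= [[h1 h2] [_ h3]].
split => //.
have : t n <= e / 2 * card_I R I n.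
  rewrite /t ler_pdivrMl // mulrA; exact: h2.
have h3' : g' n <= e / 2 * card_I R I n by exact: h3.
lra.
Qed.

Unset Implicit Arguments.

Theorem theorem5p22 (R : realType) (T : choiceType) (t0 : T)
  (I : nat -> {fset T})
  (Inest : forall n, (I n `<=` I n.+1)%fset)
  (Icover : forall t : T, exists n, t \in I n)
  (W : topologicalType) (Wcpt : compact [set: W]) (Whaus : hausdorff_space W)
  (m : (nat -> R) -> W -> R) (hm : sequence_measure_function I m)
  (p : set_system nat) (hp : free_ultrafilter p) :
  exists wp : W, forall x : nat -> R, XR (R:=R) I x ->
    plim p (fun n => x n / card_I R I n) (m x wp).
Proof.
have pF := free_proper hp.
have pFF : Filter p := pF.
have [N0 hN0] := @Ipos R T t0 I Inest Icover.
have cex : forall x, exists c, XR I x -> plim p (fun n => x n / card_I R I n) c.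
  move=> x; case: (pselect (XR I x)) => hx; last by exists 0.
  have [B hB] := ratio_bound Inest hx.
  have [c hc] := @plim_ex R p _ B hp hB.
  by exists c.
have [c hc] := choice cex.
pose D := [set i : (nat -> R) * R | XR I i.1 /\ 0 < i.2].
pose f := fun i : (nat -> R) * R => m i.1 @^-1` [set r | `|r - c i.1| <= i.2].
have fcl : forall i, D i -> closed (f i).
  move=> i [hi1 hi2]; apply: (continuous_closedP (m i.1)).1; first exact: (hm.1 _ hi1).
  have -> : [set r | `|r - c i.1| <= i.2] = closed_ball (c i.1) i.2.
    rewrite closed_ballE //; apply/seteqP; split => r /=; by rewrite distrC.
  exact: closed_ball_closed.
have hfin : finI D f.
  move=> D' sD'.
  have hs : forall i, i \in (D' : seq _) -> XR I i.1 /\ 0 < i.2.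
    by move=> i /sD'; rewrite inE.
  have [g1 g2 g3] := @gsum_prop R T I Inest W m hm p hp N0 hN0 c (fun x hx => hc x hx) _ hs.
  set g := (fun n => \sum_(i <- D') (i.2)^-1 * `|i.1 n - c i.1 * iseq R I n|) in g1 g2 g3.
  have [[w hw]|nw] := pselect (exists w, m g w < 1); last first.
    exfalso.
    have ge1 : forall w, 1 <= m g w.
      by move=> w; rewrite leNgt; apply/negP => h; apply: nw; exists w.
    have g3' : forall e, 0 < e -> p [set n | (N0 <= n)%N /\ g n <= e * card_I R I n] := g3.
    have [a [b [ha [hb eg]]]] := g1.
    have hI1 : Xplus I (fun n => 1 * iseq R I n).
      exact: (@Xplus_scale R T I (iseq R I) 1 ler01 (Xplus_fc (@fc_iseq R T I Inest))).
    have hib : Xplus I (fun n => b n + 1 * iseq R I n) := Xplus_add hb hI1.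
    have [_ [_ [_ [ho _]]]] := hm.
    have sl := (ho _ _ hib ha).1.
    have : forall w, m (fun n => b n + 1 * iseq R I n) w <= m a w.
      move=> w; rewrite (m_add hm w (XR_Xplus hb) (XR_Xplus hI1)) (m_const Inest hm 1 w).
      have := ge1 w; rewrite eg (m_sub hm w (XR_Xplus ha) (XR_Xplus hb)); lra.
    move=> /sl sl'.
    have h12 : (0 : R) < 1 / 2 by rewrite divr_gt0.
    have PS := g3' _ h12.
    have L : (limn_einf (fun n => ((a n - (b n + 1 * iseq R I n)) / card_I R I n)%:E) <= (- (1/2))%:E)%E.
      apply: linf_le => N; have [k [Nk [h0 hk]]] := @free_inf p _ hp PS N; exists k; split => //.
        have cp := hN0 k h0.
        have gk : g k = a k - b k by rewrite eg.
        rewrite ler_pdivrMr // /iseq; lra.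
    have := le_trans sl' L; rewrite lee_fin; lra.
  exists w => i /= iD'.
  have [hi1 hi2] := hs i iD'.
  have := (g2 w).2 i iD'.
  move=> h; have h' : `|m i.1 w - c i.1| / i.2 < 1 by rewrite mulrC; exact: le_lt_trans h hw.
  rewrite ltr_pdivrMr // mul1r in h'; exact: ltW.
pose F := filter_from (finI_from D f) id.
have FF : ProperFilter F := finI_filter hfin.
have FT : F setT by exact: filterT.
have [w [_ wcl]] := Wcpt F FF FT.
exists w => x hx.
have key : forall e, 0 < e -> `|m x w - c x| <= e.
  move=> e e0; have Di : D (x, e) by split.
  have cl : closure (f (x, e)) w.
    move=> B hB; apply: wcl hB; exists (f (x, e)) => //; exact: finI_from1.
  have E := (closure_id (f (x, e))).1 (fcl _ Di).
  by rewrite -E in cl.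
have -> : m x w = c x.
  apply/eqP; rewrite -subr_eq0 -normr_eq0; apply/eqP.
  have h0 := normr_ge0 (m x w - c x).
  case: (ltrP 0 `|m x w - c x|) => hpos; last by apply/le_anti/andP.
  have := key _ (divr_gt0 hpos (ltr0n _ 2)); lra.
exact: hc x hx.
Qed.
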